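(* Let $(\mathbb{B},\|\cdot\|)$ be a Banach space, $(\mathcal{F}_n)_{n\ge0}$ a filtration, $n\ge1$, $p\in(1,2]$, $v>0$, $\mu\in\mathbb{B}$, and let $X_n$ be a $\mathbb{B}$-valued random variable with $\mathbb{E}(X_n\mid\mathcal{F}_{n-1})=\mu$ and $\mathbb{E}(\|X_n-\mu\|^p\mid\mathcal{F}_{n-1})\le v<\infty$. Let $\widehat{Z}_n$ be an $\mathcal{F}_{n-1}$-measurable $\mathbb{B}$-valued random variable, set $Y_n:=X_n-\widehat{Z}_n$, and for $\lambda>0$ define $\widetilde{\mu}_n(\lambda):=\mathbb{E}(\mathtt{Trunc}(\lambda Y_n)Y_n\mid\mathcal{F}_{n-1})+\widehat{Z}_n$. Then, almost surely, \[ \|\mu-\widetilde{\mu}_n(\lambda)\|\le K_p2^{p-1}\lambda^{p-1}\big(v+\|\widehat{Z}_n-\mu\|^p\big). \]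
   Context: $\mathtt{Trunc}(x):=\min\{1,1/\|x\|\}$ for $x\ne0$ and $\mathtt{Trunc}(0):=1$. $K_p:=\frac{1}{p}\left(\frac{p-1}{p}\right)^{p-1}$. *)

(* Defs.v *)
From HB Require Import structures.
From mathcomp Require Import all_boot all_order all_algebra.
From mathcomp Require Import all_classical all_reals all_analysis.
Set Implicit Arguments. Unset Strict Implicit. Unset Printing Implicit Defensive.
Import Order.TTheory GRing.Theory Num.Theory.
Import numFieldNormedType.Exports.
Local Open Scope classical_set_scope.
Local Open Scope ring_scope.

Definition Trunc {R : realType} {V : normedModType R} (x : V) : R :=
  if x == 0 then 1 else Num.min 1 (`|x|^-1).

Definition Kp {R : realType} (p : R) : R := p^-1 * ((p - 1) / p) `^ (p - 1).

Definition sub_sigma {d} {T : measurableType d} (G : set (set T)) : Prop :=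
  sigma_algebra setT G /\ G `<=` measurable.

Definition strongly_meas {d} {T : measurableType d} {R : realType}
    {V : normedModType R} (G : set (set T)) (f : T -> V) : Prop :=
  exists s : nat -> T -> V,
    (forall k, finite_set (range (s k)) /\ forall y, G (s k @^-1` [set y])) /\
    (forall t, (fun k => s k t) @ \oo --> f t).

(* Y is a version of the (Bochner) conditional expectation E(X | G):
   X strongly measurable with integrable norm, Y strongly G-measurable with
   integrable norm, and for every continuous linear functional phi and every
   A in G, int_A phi(X) dP = int_A phi(Y) dP (equivalently, by Hahn-Banach and
   separability of the ranges, int_A X dP = int_A Y dP as Bochner integrals). *)
Definition cond_exp {d} {T : measurableType d} {R : realType}
    {V : normedModType R} (P : probability T R) (G : set (set T))
    (X Y : T -> V) : Prop :=
  [/\ strongly_meas measurable X,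
      P.-integrable setT (EFin \o (fun t => `|X t|)),
      strongly_meas G Y,
      P.-integrable setT (EFin \o (fun t => `|Y t|)) &
      forall (phi : {linear V -> R^o}), continuous phi ->
        forall A, G A ->
          (\int[P]_(t in A) (phi (X t))%:E = \int[P]_(t in A) (phi (Y t))%:E)%E].

(* Main.v *)
Require Import Defs.
From HB Require Import structures.
From mathcomp Require Import all_boot all_order all_algebra.
From mathcomp Require Import all_classical all_reals all_analysis.
From mathcomp Require Import ring lra measurable_realfun.
Set Implicit Arguments. Unset Strict Implicit. Unset Printing Implicit Defensive.
Import Order.TTheory GRing.Theory Num.Theory.
Import numFieldNormedType.Exports.
Local Open Scope classical_set_scope.
Local Open Scope ring_scope.
Section elem.
Variable R : realType.
Implicit Types p s x a b : R.

Lemma bern p x : 1 < p -> 0 <= x -> 1 + p * (x - 1) <= x `^ p.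
Proof.
move=> p1 x0.
have p0 : 0 < p := lt_trans ltr01 p1.
have pm1 : 0 < p - 1 by rewrite subr_gt0.
have q0 : 0 < p / (p - 1) by rewrite divr_gt0.
have := @conjugate_powR R x 1 p (p / (p - 1)) x0 ler01 p0 q0.
rewrite invf_div powR1 mulr1 => /(_ _).
have -> : p^-1 + (p - 1) / p = 1 by field; rewrite gt_eqF.
move=> /(_ erefl) H.
have : x * p <= x `^ p + (p - 1).
  rewrite -ler_pdivlMr // mulrDl. by move: H; rewrite mul1r.
nra.
Qed.

Lemma keyineq p s : 1 < p -> 0 <= s -> s - 1 <= Kp p * s `^ p.
Proof.
move=> p1 s0.
have p0 : 0 < p := lt_trans ltr01 p1.
have pm1 : 0 < p - 1 by rewrite subr_gt0.
set r := (p - 1) / p.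
have r0 : 0 < r by rewrite divr_gt0.
set x := s * r.
have x0 : 0 <= x by rewrite mulr_ge0 // ltW.
have sE : s = x * r^-1 by rewrite /x mulrK // unitfE gt_eqF.
have hB : r `^ p * r^-1 `^ p = 1.
  by rewrite -powRM ?invr_ge0 ?ltW // mulfV ?gt_eqF // powR1.
have hA : r `^ p = r `^ (p - 1) * r.
  by rewrite powRB ?gt_eqF ?implybT // powRr1 ?(ltW r0) // divfK ?gt_eqF.
have KE : Kp p * s `^ p = x `^ p / (p - 1).
  rewrite /Kp -/r sE powRM ?invr_ge0 ?(ltW r0) //.
  have -> : r `^ (p - 1) = r^-1 / r^-1 `^ p.
    apply: (mulIf (x := r * r^-1 `^ p)); first by rewrite mulf_neq0 ?gt_eqF ?powR_gt0 ?invr_gt0.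
    rewrite mulrA -hA hB.
    have h1 : r^-1 `^ p != 0 by rewrite gt_eqF // powR_gt0 // invr_gt0.
    have h2 : r != 0 by rewrite gt_eqF.
    by field; rewrite h1 h2.
  rewrite /r; field.
  rewrite !gt_eqF ?powR_gt0 ?invr_gt0 ?divr_gt0 //.
have := bern p1 x0.
rewrite KE.
have -> : x = s * (p - 1) / p by rewrite /x /r mulrA.
move=> H.
rewrite ler_pdivlMr //.
have e : p * (s * (p - 1) / p - 1) = s * (p - 1) - p by field; rewrite gt_eqF.
rewrite e in H.
nra.
Qed.

Lemma half_convex p a b : 1 <= p -> 0 <= a -> 0 <= b ->
  (2^-1 * a + 2^-1 * b) `^ p <= 2^-1 * a `^ p + 2^-1 * b `^ p.
Proof.
move=> p1 a0 b0.
rewrite {2 4}(_ : 2^-1 = 1 - 2^-1); last by rewrite {2}(splitr 1) div1r addrK.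
by apply: (convex_powR p1 (Itv01 _ _)) => //=;
  rewrite ?inE/= ?in_itv/= ?a0 ?b0 ?invr_ge0// invf_le1 ?ler1n.
Qed.

Lemma powR_sum2 p a b : 1 <= p -> 0 <= a -> 0 <= b ->
  (a + b) `^ p <= 2 `^ (p - 1) * (a `^ p + b `^ p).
Proof.
move=> p1 a0 b0.
have p0 : 0 < p := lt_le_trans ltr01 p1.
have := half_convex p1 a0 b0.
rewrite -mulrDr -mulrDr powRM ?invr_ge0 ?addr_ge0 // => H.
have h2 : 2 `^ (p - 1) = 2 `^ p / 2.
  have gen : forall c : R, 0 < c -> c `^ (p - 1) = c `^ p / c.
    move=> c c0; rewrite powRB; last by apply/implyP => _; rewrite gt_eqF.
    by rewrite (powRr1 (ltW c0)).
  by apply: gen.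
have h3 : 2^-1 `^ p = (2 `^ p)^-1.
  apply: (mulfI (x := 2 `^ p)); first by rewrite powR_eq0 negb_and pnatr_eq0.
  rewrite -powRM ?invr_ge0 // mulfV ?pnatr_eq0 // powR1 mulfV //.
rewrite h3 in H.
have g0 : 0 < 2 `^ p :> R by rewrite powR_gt0.
rewrite h2 (_ : (a + b) `^ p = 2 `^ p * ((2 `^ p)^-1 * (a + b) `^ p)); last first.
  by rewrite mulrA mulfV ?gt_eqF // mul1r.
apply: le_trans (ler_wpM2l (ltW g0) H) _.
by rewrite mulrA.
Qed.

Lemma trunc_bound (B : normedModType R) (y : B) lam p : 0 < lam -> 1 < p ->
  `|y - Trunc (lam *: y) *: y| <= Kp p * lam `^ (p - 1) * `|y| `^ p.
Proof.
move=> l0 p1.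
have p0 : 0 < p := lt_trans ltr01 p1.
have Kp0 : 0 <= Kp p by rewrite /Kp mulr_ge0 ?powR_ge0 // invr_ge0 ltW.
have rhs0 : 0 <= Kp p * lam `^ (p - 1) * `|y| `^ p.
  by apply: mulr_ge0; [apply: mulr_ge0|]; rewrite ?powR_ge0.
rewrite /Trunc.
have [->|y0] := eqVneq y 0.
  by rewrite !scaler0 subrr normr0 powR0 ?mulr0 // gt_eqF.
have ly0 : lam *: y != 0 by rewrite scaler_eq0 negb_or gt_eqF.
rewrite (negbTE ly0) normrZ gtr0_norm //.
have ny0 : 0 < `|y| by rewrite normr_gt0.
set s := lam * `|y|.
have s0 : 0 < s by rewrite mulr_gt0.
have [s1|s1] := leP s 1.
  rewrite (_ : Num.min 1 s^-1 = 1) ?scale1r ?subrr ?normr0 //.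
  by apply/min_idPl; rewrite invf_ge1.
rewrite (_ : Num.min 1 s^-1 = s^-1); last by apply/min_idPr; rewrite invf_le1 // ltW.
rewrite -{1}(scale1r y) -scalerBl normrZ ger0_norm; last first.
  by rewrite subr_ge0 invf_le1 // ltW.
have key := keyineq p1 (ltW s0).
have hl : lam `^ (p - 1) * `|y| `^ p = s `^ p / lam.
  rewrite /s powRM ?(ltW l0) ?normr_ge0 // powRB ?gt_eqF ?implybT // powRr1 ?(ltW l0) //.
  by rewrite mulrAC.
rewrite -mulrA hl mulrA.
rewrite ler_pdivlMr //.
have e : (1 - s^-1) * `|y| * lam = s - 1.
  by rewrite /s; field; rewrite !gt_eqF.
by rewrite e.
Qed.
End elem.
Section HBsec.
Variables (R : realType) (V : normedModType R).

Definition lin_graph (G : set (V * R)) : Prop :=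
  [/\ G (0, 0),
      forall x r y s, G (x, r) -> G (y, s) -> G (x + y, r + s),
      forall (a : R) x r, G (x, r) -> G (a *: x, a * r) &
      forall x r, G (x, r) -> r <= `|x| ].

Lemma lin_graph_fun G x r s : lin_graph G -> G (x, r) -> G (x, s) -> r = s.
Proof.
case=> _ Gadd Gsc Gdom Gr Gs.
have h1 := Gdom _ _ (Gadd _ _ _ _ Gr (Gsc (-1) _ _ Gs)).
have h2 := Gdom _ _ (Gadd _ _ _ _ Gs (Gsc (-1) _ _ Gr)).
rewrite scaleN1r subrr normr0 mulN1r subr_le0 in h1.
rewrite scaleN1r subrr normr0 mulN1r subr_le0 in h2.
by apply/eqP; rewrite eq_le h1 h2.
Qed.

Lemma lin_graph_ext G x0 : lin_graph G -> ~ (exists r, G (x0, r)) ->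
  exists G', [/\ lin_graph G', G `<=` G' & exists a, G' (x0, a)].
Proof.
move=> lG nx0; have [G0 Gadd Gsc Gdom] := lG.
pose E := [set t | exists s r, G (s, r) /\ t = r - `|s - x0|].
have E0 : E !=set0 by exists (0 - `|0 - x0|), 0, 0.
have Eub : forall s r, G (s, r) -> ubound E (`|s + x0| - r).
  move=> s r Gsr _ [s' [r' [Gsr' ->]]].
  have h := Gdom _ _ (Gadd _ _ _ _ Gsr' Gsr).
  have h2 := ler_normD (s' - x0) (s + x0).
  have e : s' - x0 + (s + x0) = s' + s by rewrite -addrA (addrC s) addKr.
  rewrite e in h2.
  lra.
pose a := sup E.
have Ehs : has_sup E by split => //; exists (`|0 + x0| - 0); exact: Eub.
have aub : forall s r, G (s, r) -> a <= `|s + x0| - r.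
  by move=> s r Gsr; apply: ge_sup => //; exact: Eub.
have alb : forall s r, G (s, r) -> r - `|s - x0| <= a.
  by move=> s r Gsr; apply: sup_upper_bound => //; exists s, r.
pose G' := [set u | exists s r (t : R), G (s, r) /\ u = (s + t *: x0, r + t * a)].
exists G'; split.
- split.
  + by exists 0, 0, 0; rewrite scale0r mul0r !addr0.
  + move=> x r y s [s1 [r1 [t1 [G1 [-> ->]]]]] [s2 [r2 [t2 [G2 [-> ->]]]]].
    exists (s1 + s2), (r1 + r2), (t1 + t2); split; first exact: Gadd.
    by congr (_, _); rewrite ?scalerDl ?mulrDl; rewrite addrACA.
  + move=> c x r [s1 [r1 [t1 [G1 [-> ->]]]]].
    exists (c *: s1), (c * r1), (c * t1); split; first exact: Gsc.
    by rewrite scalerDr scalerA mulrDr mulrA.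
  + move=> x r [s [r1 [t [G1 [-> ->]]]]].
    have [t0|t0|->] := ltgtP t 0; last by rewrite scale0r mul0r !addr0; exact: Gdom.
    * set u := - t.
      have u0 : 0 < u by rewrite oppr_gt0.
      have := alb _ _ (Gsc u^-1 _ _ G1).
      have e : u^-1 *: s - x0 = u^-1 *: (s - u *: x0).
        by rewrite scalerBr scalerA mulVf ?gt_eqF // scale1r.
      rewrite e normrZ gtr0_norm ?invr_gt0 // -mulrBr.
      move=> H; have := ler_wpM2l (ltW u0) H.
      rewrite mulrA mulfV ?gt_eqF // mul1r => H'.
      have -> : s + t *: x0 = s - u *: x0 by rewrite /u scaleNr opprK.
      have -> : r1 + t * a = r1 - u * a by rewrite /u mulNr opprK.
      lra.
    * have := aub _ _ (Gsc t^-1 _ _ G1).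
      rewrite -[X in `|_ + X|](scale1r x0) -(mulVf (x := t)) ?gt_eqF // -scalerA.
      rewrite -scalerDr normrZ gtr0_norm ?invr_gt0 // -mulrBr.
      move=> H; have := ler_wpM2l (ltW t0) H.
      rewrite mulrA mulfV ?gt_eqF // mul1r => H'.
      lra.
- by move=> [s r] Gsr; exists s, r, 0; rewrite scale0r mul0r !addr0.
- by exists a, 0, 0, 1; rewrite add0r scale1r mul1r add0r.
Qed.


Lemma hahn_banach_graph (z : V) : exists G, lin_graph G /\ G (z, `|z|) /\
  forall x, exists r, G (x, r).
Proof.
pose G0 := [set u | exists t : R, u = (t *: z, t * `|z|)].
have lG0 : lin_graph G0.
  split.
  - by exists 0; rewrite scale0r mul0r.
  - move=> x r y s [t1 [-> ->]] [t2 [-> ->]]; exists (t1 + t2).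
    by rewrite scalerDl mulrDl.
  - by move=> a x r [t [-> ->]]; exists (a * t); rewrite scalerA mulrA.
  - move=> x r [t [-> ->]]; rewrite normrZ ler_wpM2r //; exact: ler_norm.
pose P := fun A => lin_graph (A `|` G0).
have [A [PA Amax]] : exists A, P A /\ forall B, A `<` B -> ~ P B.
  apply: Zorn_bigcup => F FP Ftot.
  have mem : forall u, (\bigcup_(X in F) X `|` G0) u ->
      exists C, [/\ F C \/ C = set0, (C `|` G0) u & P C].
    move=> u [[C FC Cu]|G0u]; first by exists C; split => //; [left|left|exact: FP].
    exists set0; split; [by right|by right|by rewrite /P set0U].
  have two : forall C1 C2, F C1 \/ C1 = set0 -> F C2 \/ C2 = set0 ->
      exists C, [/\ C1 `<=` C, C2 `<=` C & F C \/ C = set0].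
    move=> C1 C2 [FC1|->] [FC2|->].
    - have [C12|C21] := Ftot _ _ FC1 FC2.
        by exists C2; split => //; left.
      by exists C1; split => //; left.
    - by exists C1; split => //; left.
    - by exists C2; split => //; left.
    - by exists set0; split => //; right.
  have PC : forall C, F C \/ C = set0 -> P C.
    by move=> C [/FP //|->]; rewrite /P set0U.
  have sub : forall C, F C \/ C = set0 -> C `|` G0 `<=` \bigcup_(X in F) X `|` G0.
    move=> C [FC|->] w [Cw|G0w]; [left; exists C|right|by []|right] => //.
  have [lC1 lC2 lC3 lC4] := lG0.
  rewrite /P; split.
  - by right; exists 0; rewrite scale0r mul0r.
  - move=> x r y s /mem [C1 [h1 u1 _]] /mem [C2 [h2 u2 _]].
    have [C [s1 s2 hC]] := two _ _ h1 h2.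
    have [_ cadd _ _] := PC _ hC.
    apply: (sub _ hC); apply: cadd.
      by case: u1 => [/s1|]; [left|right].
    by case: u2 => [/s2|]; [left|right].
  - move=> a x r /mem [C [hC u _]].
    have [_ _ csc _] := PC _ hC.
    by apply: (sub _ hC); apply: csc.
  - move=> x r /mem [C [hC u _]].
    have [_ _ _ cdom] := PC _ hC.
    exact: cdom.
have sG0 : G0 (z, `|z|) by exists 1; rewrite scale1r mul1r.
exists (A `|` G0); split => //; split; first by right.
move=> x0; apply: contrapT => nx0.
have [G' [lG' sG' [a G'a]]] := lin_graph_ext PA nx0.
apply: (Amax G').
  split; first by move=> u Au; apply: sG'; left.
  move=> G'A; apply: nx0; exists a.
  by left; exact: G'A _ G'a.
rewrite /P (_ : G' `|` G0 = G') //.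
apply/seteqP; split => [u [//|G0u]|u G'u]; last by left.
by apply: sG'; right.
Qed.

End HBsec.

Section MkLin.
Variables (R : realType) (V : normedModType R) (f : V -> R) (hf : linear_for *:%R f).
Definition mklin : V -> R^o := let _ := hf in f.
HB.instance Definition _ := GRing.isLinear.Build R V R^o *:%R mklin hf.
End MkLin.

Lemma hahn_banach (R : realType) (V : normedModType R) (z : V) :
  exists phi : {linear V -> R^o}, [/\ continuous phi, phi z = `|z| &
    forall x, `|phi x| <= `|x|].
Proof.
have [G [lG [Gz Gall]]] := hahn_banach_graph z.
pose f := fun x => projT1 (cid (Gall x)).
have fP : forall x, G (x, f x) by move=> x; rewrite /f; case: cid.
have [G0 Gadd Gsc Gdom] := lG.
have hf : linear_for *:%R (f : V -> R^o).
  move=> a x y; apply: (lin_graph_fun lG (fP _)).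
  exact: Gadd (Gsc _ _ _ (fP x)) (fP y).
have fle : forall x, `|f x| <= `|x|.
  move=> x; rewrite ler_norml Gdom ?fP // andbT.
  have := Gdom _ _ (Gsc (-1) _ _ (fP x)).
  by rewrite scaleN1r normrN mulN1r lerNl.
exists (@mklin _ _ f hf); split.
- apply: bounded_linear_continuous; apply/bounded_funP => r.
  exists r => x xr; exact: le_trans (fle x) xr.
- exact: (lin_graph_fun lG (fP z) Gz).
- exact: fle.
Qed.

Section meas.
Context d (T : measurableType d) (R : realType).
Variable G : set (set T).
Hypothesis sG : sigma_algebra setT G.

Let TG := g_sigma_algebraType G.

Lemma measTG (A : set T) : (measurable : set (set TG)) A <-> G A.
Proof. by rewrite measurable_g_measurableTypeE. Qed.

Definition Gmeas (h : T -> R) := forall Y, measurable Y -> G (h @^-1` Y).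

Lemma GmeasP (h : T -> R) : Gmeas h <-> @measurable_fun _ _ TG R setT h.
Proof.
split => [hG _ Y mY|mh Y mY].
  by rewrite setTI; apply/measTG; exact: hG.
by apply/measTG; rewrite -[_ @^-1` _]setTI; exact: mh.
Qed.

Lemma simple_preimage (V : Type) (s : T -> V) : finite_set (range s) ->
  (forall y, G (s @^-1` [set y])) -> forall Y, G (s @^-1` Y).
Proof.
move=> fs hs Y.
have -> : s @^-1` Y = \bigcup_(y in range s `&` Y) s @^-1` [set y].
  apply/seteqP; split => [t Yt|t [y [_ Yy] /= ->]] //.
  by exists (s t) => //; split => //; exists t.
apply/measTG; apply: fin_bigcup_measurable.
  exact: finite_setIl.
by move=> y _; apply/measTG.
Qed.

Lemma strongly_meas_comp (V : normedModType R) (f : T -> V) (g : V -> R) :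
  strongly_meas G f -> continuous g -> Gmeas (g \o f).
Proof.
move=> [s [hs hcvg]] gc; apply/GmeasP.
apply: (@measurable_fun_cvg _ TG R setT (fun k => g \o s k)).
  move=> k; apply/GmeasP => Y mY.
  have [fs ps] := hs k.
  exact: (simple_preimage fs ps (g @^-1` Y)).
move=> t _; exact: (cvg_comp _ _ (hcvg t) (gc (f t))).
Qed.

End meas.
Section ints.
Context d (T : measurableType d) (R : realType) (P : probability T R).

Lemma intC (A : set T) (k : R) : measurable A -> P.-integrable A (EFin \o cst k).
Proof.
move=> mA; apply/integrableP; split; first by apply/measurable_EFinP; exact: measurable_cst.
rewrite (_ : (fun x => _) = cst `|k|%:E); last by apply/funext => x /=.
rewrite integral_cst //= lte_mul_pinfty //.
by rewrite (le_lt_trans (probability_le1 P mA)) // ltey.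
Qed.

Lemma intD (A : set T) (f g : T -> R) : measurable A -> P.-integrable A (EFin \o f) ->
  P.-integrable A (EFin \o g) -> P.-integrable A (EFin \o (fun t => f t + g t)).
Proof.
move=> mA hf hg; apply: (@eq_integrable _ _ _ P A mA _ _ _ (@integrableD _ _ _ P A mA _ _ hf hg)) => t _ /=; by rewrite EFinD.
Qed.

Lemma intB (A : set T) (f g : T -> R) : measurable A -> P.-integrable A (EFin \o f) ->
  P.-integrable A (EFin \o g) -> P.-integrable A (EFin \o (fun t => f t - g t)).
Proof.
move=> mA hf hg; apply: (@eq_integrable _ _ _ P A mA _ _ _ (@integrableB _ _ _ P A mA _ _ hf hg)) => t _ /=; by rewrite EFinB.
Qed.

Lemma intZ (A : set T) (k : R) (f : T -> R) : measurable A -> P.-integrable A (EFin \o f) ->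
  P.-integrable A (EFin \o (fun t => k * f t)).
Proof.
move=> mA hf; apply: (@eq_integrable _ _ _ P A mA _ _ _ (@integrableZl _ _ _ P A mA k _ hf)) => t _ /=; by rewrite EFinM.
Qed.

Lemma intS (A : set T) (f : T -> R) : measurable A -> P.-integrable setT (EFin \o f) ->
  P.-integrable A (EFin \o f).
Proof. by move=> mA; apply: integrableS. Qed.

Lemma int_bound (A : set T) (f g : T -> R) : measurable A -> measurable_fun setT f ->
  P.-integrable A (EFin \o g) -> (forall t, A t -> `|f t| <= `|g t|) ->
  P.-integrable A (EFin \o f).
Proof.
move=> mA mf hg fg; apply: (@le_integrable _ _ _ P A mA _ (EFin \o g) _ _ hg).
  by apply/measurable_EFinP; exact: measurable_funS mf.
by move=> t At /=; rewrite lee_fin; exact: fg.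
Qed.

End ints.

Section meas2.
Context d (T : measurableType d) (R : realType).

Lemma Gmeas_mT (G : set (set T)) (h : T -> R) : G `<=` measurable ->
  Gmeas G h -> measurable_fun setT h.
Proof. by move=> GM hG _ Y mY; rewrite setTI; apply: GM; exact: hG. Qed.

Lemma smeas_comp (G : set (set T)) (V : normedModType R) (f : T -> V) (g : V -> R) :
  sigma_algebra setT G -> G `<=` measurable ->
  strongly_meas G f -> continuous g -> measurable_fun setT (g \o f).
Proof.
move=> sG GM hf hg; apply: (Gmeas_mT GM).
exact: strongly_meas_comp.
Qed.

Lemma smeas_compT (V : normedModType R) (f : T -> V) (g : V -> R) :
  strongly_meas measurable f -> continuous g -> measurable_fun setT (g \o f).
Proof.
move=> hf hg; apply: (smeas_comp (@sigma_algebra_measurable _ T)) => //.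
Qed.

End meas2.

Section mainsec.
Context (d : measure_display) (T : measurableType d) (R : realType)
  (P : probability T R) (B : completeNormedModType R)
  (F : nat -> set (set T)) (hF : forall k, sub_sigma (F k))
  (n : nat) (p : R) (hp1 : 1 < p) (v : R) (hv : 0 < v) (mu : B)
  (X : T -> B) (hXmean : cond_exp P (F n.-1) X (cst mu))
  (W' : T -> R^o)
  (hW'1 : cond_exp P (F n.-1) (fun t => (`|X t - mu| `^ p : R^o)) W')
  (hW'2 : {ae P, forall t, W' t <= v})
  (Zh : T -> B) (hZ : strongly_meas (F n.-1) Zh)
  (lambda : R) (hlambda : 0 < lambda)
  (W : T -> B)
  (hW : cond_exp P (F n.-1)
          (fun t => Trunc (lambda *: (X t - Zh t)) *: (X t - Zh t)) W).

Local Notation G := (F n.-1).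
Let sG : sigma_algebra setT G := (hF n.-1).1.
Let GM : G `<=` measurable := (hF n.-1).2.
Let c := Kp p * 2 `^ (p - 1) * lambda `^ (p - 1).
Let Z t := mu - (W t + Zh t).
Let bnd t := c * (v + `|Zh t - mu| `^ p).
Let TY t := Trunc (lambda *: (X t - Zh t)) *: (X t - Zh t).

Lemma ptw (phi : {linear B -> R^o}) (hphi : forall x, `|phi x| <= `|x|) t :
  phi (X t) - phi (Zh t) - phi (TY t) <= c * (`|X t - mu| `^ p + `|Zh t - mu| `^ p).
Proof.
have p0 : 0 < p := lt_trans ltr01 hp1.
rewrite -!linearB /=.
set y := X t - Zh t.
apply: le_trans (ler_norm _) _.
apply: le_trans (hphi _) _.
apply: le_trans (trunc_bound y hlambda hp1) _.
have Kp0 : 0 <= Kp p by rewrite /Kp mulr_ge0 ?powR_ge0 // invr_ge0 ltW.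
have hy : `|y| <= `|X t - mu| + `|Zh t - mu|.
  have -> : y = (X t - mu) - (Zh t - mu) by rewrite /y opprB addrA subrK.
  exact: ler_normB.
have hy2 : `|y| `^ p <= (`|X t - mu| + `|Zh t - mu|) `^ p.
  by apply: ge0_ler_powR => //; rewrite ?ltW // nnegrE // addr_ge0.
have hy3 := powR_sum2 (ltW hp1) (normr_ge0 (X t - mu)) (normr_ge0 (Zh t - mu)).
have -> : c * (`|X t - mu| `^ p + `|Zh t - mu| `^ p) =
  Kp p * lambda `^ (p - 1) * (2 `^ (p - 1) * (`|X t - mu| `^ p + `|Zh t - mu| `^ p)).
  by rewrite /c; ring.
apply: ler_wpM2l; first by rewrite mulr_ge0 // powR_ge0.
exact: le_trans hy2 hy3.
Qed.


Let TG := g_sigma_algebraType G.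

Lemma stepA (phi : {linear B -> R^o}) : continuous phi ->
  (forall x, `|phi x| <= `|x|) -> {ae P, forall t, phi (Z t) <= bnd t}.
Proof.
move=> phic hphi.
have p0 : 0 < p := lt_trans ltr01 hp1.
have c0 : 0 <= c.
  apply: mulr_ge0; [apply: mulr_ge0|]; rewrite ?powR_ge0 //.
  by rewrite /Kp mulr_ge0 ?powR_ge0 // invr_ge0 ltW.
have [smX iX _ _ eX] := hXmean.
have [smTY iTY smW iW eW] := hW.
have [smq iq smW' iW' eq] := hW'1.
pose r0 t := `|Zh t - mu|.
pose h t := phi mu - (phi (W t) + phi (Zh t)) - bnd t.
have hZ' : forall t, phi (Z t) - bnd t = h t.
  by move=> t; rewrite /Z /h linearB linearD.
have ncont : continuous (fun x : B => `|x - mu|).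
  move=> x; apply: (@continuous_comp _ _ _ (fun y : B => y - mu) Num.norm).
    by apply: cvgB; [exact: cvg_id|exact: cvg_cst].
  exact: norm_continuous.
have mr0G : @measurable_fun _ _ TG R setT r0.
  by apply/(GmeasP sG); exact: (strongly_meas_comp sG hZ ncont).
have mphiWG : @measurable_fun _ _ TG R setT (fun t => phi (W t)).
  by apply/(GmeasP sG); exact: (strongly_meas_comp sG smW phic).
have mphiZG : @measurable_fun _ _ TG R setT (fun t => phi (Zh t)).
  by apply/(GmeasP sG); exact: (strongly_meas_comp sG hZ phic).
have mhG : @measurable_fun _ _ TG R setT h.
  apply: measurable_funB.
    apply: measurable_funB; first exact: measurable_cst.
    exact: measurable_funD.
  apply: measurable_funM; first exact: measurable_cst.
  apply: measurable_funD; first exact: measurable_cst.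
  exact: (measurableT_comp (measurable_powR p) mr0G).
pose A (m M : nat) := [set t | (m.+1%:R)^-1 < h t] `&` [set t | r0 t <= M%:R].
have GA : forall m M, G (A m M).
  move=> m M; apply/(measTG sG); apply: measurableI.
    have := mhG measurableT (`](m.+1%:R)^-1, +oo[%classic) (measurable_itv _).
    rewrite setTI; congr (_ _); apply/seteqP; split => t /=; by rewrite in_itv /= andbT.
  have := mr0G measurableT (`]-oo, M%:R]%classic) (measurable_itv _).
  rewrite setTI; congr (_ _); apply/seteqP; split => t /=; by rewrite in_itv /=.
have PA0 : forall m M, P (A m M) = 0.
  move=> m M; have mA : measurable (A m M) := GM (GA m M).
  set A0 := A m M.
  have e0 : 0 < (m.+1%:R)^-1 :> R by rewrite invr_gt0.
  have mphiX : measurable_fun setT (fun t => phi (X t)) := smeas_compT smX phic.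
  have mphiTY : measurable_fun setT (fun t => phi (TY t)) := smeas_compT smTY phic.
  have mphiW : measurable_fun setT (fun t => phi (W t)) := smeas_comp sG GM smW phic.
  have mphiZ : measurable_fun setT (fun t => phi (Zh t)) := smeas_comp sG GM hZ phic.
  have mr0 : measurable_fun setT r0 := smeas_comp sG GM hZ ncont.
  have mq : measurable_fun setT (fun t => `|X t - mu| `^ p) := smeas_compT smq (fun x => cvg_id).
  have mW' : measurable_fun setT W' := smeas_comp sG GM smW' (fun x => cvg_id).
  have iXA : P.-integrable A0 (EFin \o (fun t => phi (X t))).
    apply: (int_bound mA mphiX (intS mA iX)) => t _.
    by rewrite normr_id; exact: hphi.
  have iTYA : P.-integrable A0 (EFin \o (fun t => phi (TY t))).
    apply: (int_bound mA mphiTY (intS mA iTY)) => t _.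
    by rewrite normr_id; exact: hphi.
  have iWA : P.-integrable A0 (EFin \o (fun t => phi (W t))).
    apply: (int_bound mA mphiW (intS mA iW)) => t _.
    by rewrite normr_id; exact: hphi.
  have imuA : P.-integrable A0 (EFin \o cst (phi mu)) := intC P (phi mu) mA.
  have iZA : P.-integrable A0 (EFin \o (fun t => phi (Zh t))).
    apply: (int_bound mA mphiZ (intC P (`|mu| + M%:R) mA)) => t [_ /= Ht].
    rewrite [`|_ + _|]ger0_norm ?addr_ge0 //; apply: le_trans (hphi _) _.
    have -> : Zh t = (Zh t - mu) + mu by rewrite subrK.
    by apply: le_trans (ler_normD _ _) _; rewrite addrC lerD2l.
  have irA : P.-integrable A0 (EFin \o (fun t => r0 t `^ p)).
    apply: (int_bound mA (measurableT_comp (measurable_powR p) mr0) (intC P (M%:R `^ p) mA)).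
    move=> t [_ /= Ht]; rewrite !ger0_norm ?powR_ge0 //.
    by apply: ge0_ler_powR; rewrite ?nnegrE ?(ltW p0) // normr_ge0.
  have iqA : P.-integrable A0 (EFin \o (fun t => `|X t - mu| `^ p)).
    by apply: (int_bound mA mq (intS mA iq)) => t _; rewrite normr_id.
  have iW'A : P.-integrable A0 (EFin \o W').
    by apply: (int_bound mA mW' (intS mA iW')) => t _; rewrite normr_id.
  have ivA : P.-integrable A0 (EFin \o cst v) := intC P v mA.
  pose I f := Rintegral P A0 f.
  have E1 : I (fun t => phi (X t)) = I (cst (phi mu)).
    by rewrite /I /Rintegral (eX phi phic A0 (GA m M)).
  have E2 : I (fun t => phi (TY t)) = I (fun t => phi (W t)).
    by rewrite /I /Rintegral -(eW phi phic A0 (GA m M)).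
  have hid : linear_for *:%R (fun x : R^o => x) by [].
  have idc : continuous (@mklin R R^o (fun x => x) hid) by move=> x; exact: cvg_id.
  have E3 : I (fun t => `|X t - mu| `^ p) = I W'.
    by rewrite /I /Rintegral; congr fine; exact: (eq _ idc A0 (GA m M)).
  pose W'' t := Num.min (W' t) v.
  have mW'' : measurable_fun setT W'' by apply: measurable_minr => //; exact: measurable_cst.
  have iW''A : P.-integrable A0 (EFin \o W'').
    apply: (int_bound mA mW'' (intD mA (intS mA iW') ivA)) => t _.
    rewrite [X in _ <= X]ger0_norm ?addr_ge0 ?(ltW hv) //; rewrite /W''.
    have [aW|aW] := leP (W' t) v.
      by rewrite /= lerDl ltW.
    by rewrite /= gtr0_norm // lerDr.
  have E4 : I W' <= I (cst v).
    have -> : I W' = I W''.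
      rewrite /I /Rintegral; congr fine.
      apply: ae_eq_integral => //.
      - by apply/measurable_EFinP; exact: measurable_funS mW'.
      - by apply/measurable_EFinP; exact: measurable_funS mW''.
      - by apply: filterS hW'2 => t Wv _ /=; rewrite /W'' (_ : Num.min _ _ = W' t) //; apply/min_idPl.
    by apply: le_Rintegral => // t _; rewrite /W'' ge_min lexx orbT.
  have ibnd : P.-integrable A0 (EFin \o bnd) by apply: intZ mA (intD mA ivA irA).
  pose e t := phi (Zh t) + bnd t.
  have ie : P.-integrable A0 (EFin \o e) by apply: intD mA iZA ibnd.
  have ih : P.-integrable A0 (EFin \o h).
    by apply: intB mA (intB mA imuA (intD mA iWA iZA)) ibnd.
  have iXT : P.-integrable A0 (EFin \o (fun t => phi (X t) - phi (TY t))).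
    exact: intB mA iXA iTYA.
  have iqv : P.-integrable A0 (EFin \o (fun t => `|X t - mu| `^ p - v)).
    exact: intB mA iqA ivA.
  have Ih : I h = I (fun t => phi (X t) - phi (TY t) - e t).
    have -> : I h = I (fun t => (phi mu - phi (W t)) - e t).
      by apply: eq_Rintegral => t _; rewrite /h /e /=; lra.
    rewrite /I RintegralB //; last exact: intB mA imuA iWA.
    rewrite RintegralB // -/(I _) -/(I _) -/(I _).
    rewrite (_ : I (fun _ => phi mu) = I (cst (phi mu))) // -E1 -E2.
    by rewrite /I -RintegralB // -RintegralB.
  have up : I h <= 0.
    rewrite Ih; apply: le_trans (_ : _ <= I (fun t => c * (`|X t - mu| `^ p - v))) _.
      apply: le_Rintegral => //; first exact: intB mA iXT ie.
        exact: intZ mA iqv.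
      move=> t _; have := ptw hphi t; rewrite /e /bnd /r0 => H.
      have Hc : c * (`|X t - mu| `^ p - v) = c * (`|X t - mu| `^ p + `|Zh t - mu| `^ p) - c * (v + `|Zh t - mu| `^ p) by ring.
      rewrite Hc; lra.
    rewrite /I RintegralZl // RintegralB // -/(I _) -/(I _) E3.
    by apply: mulr_ge0_le0 => //; rewrite subr_le0.
  have low : (m.+1%:R)^-1 * fine (P A0) <= I h.
    rewrite -Rintegral_cst //; apply: le_Rintegral => //.
      exact: (intC P (m.+1%:R^-1) mA).
    by move=> t [/= Ht _]; rewrite ltW.
  have fP : fine (P A0) <= 0.
    by have := le_trans low up; rewrite pmulr_rle0.
  have fin : P A0 \is a fin_num by rewrite fin_num_measure.
  rewrite -(fineK fin); congr EFin; apply/eqP; rewrite eq_le fP /=.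
  by rewrite fine_ge0 // measure_ge0.
have N : P.-negligible (\bigcup_m \bigcup_M A m M).
  apply: negligible_bigcup => m; apply: negligible_bigcup => M.
  exists (A m M); split; [|exact: PA0|by []]. have := GM (GA m M). exact.
apply: negligibleS N => t /= Ht.
have h0 : 0 < h t by rewrite -hZ' subr_gt0 ltNge; apply/negP.
have [m Hm] := filter_ex (near_infty_natSinv_lt (PosNum h0)).
exists m => //; exists (Num.bound (r0 t)) => //; split => //=.
by rewrite ltW // archi_boundP // normr_ge0.
Qed.


Lemma final : {ae P, forall t, `|mu - (W t + Zh t)| <= c * (v + `|Zh t - mu| `^ p)}.
Proof.
have [_ _ smW _ _] := hW.
have [sW [hsW cW]] := smW.
have [sZ [hsZ cZ]] := hZ.
pose s k t := mu - (sW k t + sZ k t).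
have cs : forall t, (fun k => s k t) @ \oo --> Z t.
  move=> t; apply: cvgB; first exact: cvg_cst.
  exact: cvgD (cW t) (cZ t).
have fin : forall k, finite_set (range (s k)).
  move=> k; apply: (@sub_finite_set _ _
    [set (fun ab => mu - (ab.1 + ab.2)) x | x in range (sW k) `*` range (sZ k)]).
    by move=> _ [t _ <-]; exists (sW k t, sZ k t) => //; split; exists t.
  by apply: finite_image; apply: finite_setX; [exact: (hsW k).1|exact: (hsZ k).1].
have seqs : forall k, exists l : seq B, range (s k) = [set` l].
  by move=> k; apply/finite_seqP.
pose l k := projT1 (cid (seqs k)).
have lP : forall k, range (s k) = [set` l k] by move=> k; rewrite /l; case: cid.
pose phi (y : B) := projT1 (cid (hahn_banach y)).
have phiP : forall y, [/\ continuous (phi y), phi y y = `|y| &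
    forall x, `|phi y x| <= `|x|] by move=> y; rewrite /phi; case: cid.
have ae1 : {ae P, forall t, forall k j, phi (nth 0 (l k) j) (Z t) <= bnd t}.
  apply: ae_foralln => k; apply: ae_foralln => j.
  by have [? _ ?] := phiP (nth 0 (l k) j); apply: stepA.
apply: filterS ae1 => t Ht.
apply/ler_addgt0Pr => eps eps0.
have e2 : 0 < eps / 2 by rewrite divr_gt0.
have [k Hk] := filter_ex (cvgr_dist_lt _ _ (cs t) _ e2).
set y := s k t in Hk.
have yl : y \in l k.
  have : [set` l k] y by rewrite -lP; exists t.
  by [].
have := Ht k (index y (l k)); rewrite nth_index // => H.
have [_ py pb] := phiP y.
have h1 : `|y| <= bnd t + `|y - Z t|.
  have e : phi y y = phi y (Z t) + phi y (y - Z t).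
    by rewrite -linearD /= (addrC (Z t)) subrK.
  have := pb (y - Z t); have := ler_norm (phi y (y - Z t)).
  rewrite -py e; lra.
have h2 : `|Z t| <= `|y| + `|Z t - y|.
  by rewrite -{1}(subrK y (Z t)) addrC; exact: ler_normD.
have h3 : `|y - Z t| = `|Z t - y| by rewrite distrC.
rewrite /Z in Hk h2 h3 h1 *.
rewrite /bnd in h1.
lra.
Qed.

End mainsec.

Unset Implicit Arguments.

Theorem lemma3 (d : measure_display) (T : measurableType d) (R : realType)
  (P : probability T R) (B : completeNormedModType R)
  (F : nat -> set (set T))
  (hF : forall k, sub_sigma (F k))
  (hFmono : forall k l, (k <= l)%N -> F k `<=` F l)
  (n : nat) (hn : (1 <= n)%N)
  (p : R) (hp1 : 1 < p) (hp2 : p <= 2)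
  (v : R) (hv : 0 < v) (mu : B)
  (X : T -> B)
  (hXmeas : strongly_meas measurable X)
  (hXmean : cond_exp P (F n.-1) X (cst mu))
  (hXvar : exists W : T -> R^o,
      cond_exp P (F n.-1) (fun t => (`|X t - mu| `^ p : R^o)) W /\
      {ae P, forall t, W t <= v})
  (Zh : T -> B) (hZ : strongly_meas (F n.-1) Zh)
  (lambda : R) (hlambda : 0 < lambda)
  (W : T -> B)
  (hW : cond_exp P (F n.-1)
          (fun t => Trunc (lambda *: (X t - Zh t)) *: (X t - Zh t)) W) :
  {ae P, forall t,
     `|mu - (W t + Zh t)| <=
       Kp p * 2 `^ (p - 1) * lambda `^ (p - 1) * (v + `|Zh t - mu| `^ p)}.
Proof.
have [W' [h1 h2]] := hXvar.
exact: (final hF hp1 hv hXmean h1 h2 hZ hlambda hW).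
Qed.
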